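(* Let $G$, $P$, $w$ be as in the context and let $s,t\in V$, $s\ne t$, with at least one directed path from $s$ to $t$ in $G$. For $m\in V\setminus\{t\}$ consider $\lim_{\alpha\to0^+}F^{\{t,\overline{o}\}}_{sm}(\alpha)$ in the evaporating network $G_\alpha$. Then: (a) if $\lim_{\alpha\to0^+}F^{\{t,\overline{o}\}}_{sm}(\alpha)=0$, no shortest (minimum-cost) path from $s$ to $t$ passes through $m$; (b) if $\lim_{\alpha\to0^+}F^{\{t,\overline{o}\}}_{sm}(\alpha)=1$, $m$ lies on every shortest path from $s$ to $t$; (c) if $0<\lim_{\alpha\to0^+}F^{\{t,\overline{o}\}}_{sm}(\alpha)<1$, $m$ lies on at least one but not all shortest paths from $s$ to $t$; (d) there is more than one shortest path from $s$ to $t$ if and only if there exists $m$ with $0<\lim_{\alpha\to0^+}F^{\{t,\overline{o}\}}_{sm}(\alpha)<1$.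
   Context: $G=(V,E)$ is a finite directed graph; each edge $e_{ij}\in E$ has a positive cost $w_{ij}$. $P$ is a row-stochastic transition matrix with $P_{ij}>0$ iff $e_{ij}\in E$. Shortest paths are directed paths of minimum total cost. Evaporating network $G_\alpha$ ($0<\alpha<1$): Markov chain on $V\cup\{o\}$ with $P_{ij}(\alpha)=P_{ij}\alpha^{w_{ij}}$ ($i,j\in V$), $P_{io}(\alpha)=1-\sum_jP_{ij}\alpha^{w_{ij}}$, $o$ absorbing. Making $t$ and $o$ absorbing, with $\mathcal T=V\setminus\{t\}$, let $Q_x^{\{t,\overline o\}}(\alpha)$ be the probability that the chain from $x$ is absorbed at $t$, and $F^{\{t,o\}}(\alpha)=(I-P(\alpha)_{\mathcal T\mathcal T})^{-1}$. The avoidance fundamental matrix is $F^{\{t,\overline{o}\}}_{sm}(\alpha)=F^{\{t,o\}}_{sm}(\alpha)\,Q_m^{\{t,\overline o\}}(\alpha)/Q_s^{\{t,\overline o\}}(\alpha)$ for $s,m\in\mathcal T$ (the expected number of visits to $m$ from $s$ conditioned on absorption at $t$). *)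

(* Defs.v *)
From Stdlib Require Import Reals List Arith.
Import ListNotations.
Open Scope R_scope.

(* Vertices are the naturals 0 .. n-1. *)

Fixpoint fsum (n : nat) (f : nat -> R) : R :=
  match n with
  | O => 0
  | S k => fsum k f + f k
  end.

Definition sumT (n t : nat) (f : nat -> R) : R :=
  fsum n (fun k => if Nat.eqb k t then 0 else f k).

Definition kdelta (i j : nat) : R := if Nat.eqb i j then 1 else 0.

Definition edge (P : nat -> nat -> R) (i j : nat) : Prop := 0 < P i j.

(* transition probabilities of the evaporating network: P_ij alpha^{w_ij} *)
Definition Palpha (P w : nat -> nat -> R) (a : R) (i j : nat) : R :=
  P i j * Rpower a (w i j).

Fixpoint chain (P : nat -> nat -> R) (l : list nat) : Prop :=
  match l with
  | x :: ((y :: _) as l') => edge P x y /\ chain P l'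
  | _ => True
  end.

Fixpoint cost (w : nat -> nat -> R) (l : list nat) : R :=
  match l with
  | x :: ((y :: _) as l') => w x y + cost w l'
  | _ => 0
  end.

Definition is_path (n : nat) (P : nat -> nat -> R) (s t : nat) (p : list nat) : Prop :=
  (exists rest, p = s :: rest) /\ last p s = t /\ NoDup p /\
  Forall (fun v => (v < n)%nat) p /\ chain P p.

Definition shortest_path (n : nat) (P w : nat -> nat -> R) (s t : nat) (p : list nat) : Prop :=
  is_path n P s t p /\ forall q, is_path n P s t q -> cost w p <= cost w q.

(* F alpha is the two-sided inverse of I - P(alpha)_{TT}, i.e. F^{t,o}(alpha) *)
Definition is_fundamental (n t : nat) (P w : nat -> nat -> R) (F : R -> nat -> nat -> R) : Prop :=
  forall a, 0 < a < 1 -> forall i j, (i < n)%nat -> (j < n)%nat -> i <> t -> j <> t ->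
    sumT n t (fun k => (kdelta i k - Palpha P w a i k) * F a k j) = kdelta i j /\
    sumT n t (fun k => F a i k * (kdelta k j - Palpha P w a k j)) = kdelta i j.

(* Q alpha x = probability of absorption at t (not o) starting from x in T:
   the solution of the first-step (harmonic) equations with Q_t = 1, Q_o = 0. *)
Definition is_absorb_t (n t : nat) (P w : nat -> nat -> R) (Q : R -> nat -> R) : Prop :=
  forall a, 0 < a < 1 -> forall x, (x < n)%nat -> x <> t ->
    Q a x = sumT n t (fun y => Palpha P w a x y * Q a y) + Palpha P w a x t.

Definition Favoid (F : R -> nat -> nat -> R) (Q : R -> nat -> R) (s m : nat) (a : R) : R :=
  F a s m * Q a m / Q a s.

Definition lim0plus (f : R -> R) (L : R) : Prop :=
  limit1_in f (fun a => 0 < a < 1) L 0.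

(* Main.v *)
Require Import Defs.
From Stdlib Require Import Reals List Arith Lra Lia ListDec Permutation Classical FunctionalExtensionality Bool ZArith.
Import ListNotations.
Open Scope bool_scope.
Open Scope R_scope.

Definition lsum {A} (f : A -> R) (L : list A) : R :=
  fold_right (fun x acc => f x + acc) 0 L.

Lemma lsum_app {A} (f : A -> R) L1 L2 : lsum f (L1 ++ L2) = lsum f L1 + lsum f L2.
Proof. induction L1; simpl; [ring| rewrite IHL1; ring]. Qed.

Lemma lsum_ext {A} (f g : A -> R) L : (forall x, In x L -> f x = g x) -> lsum f L = lsum g L.
Proof. induction L; simpl; intros H; auto. rewrite H, IHL; auto. Qed.

Lemma lsum_nonneg {A} (f : A -> R) L : (forall x, In x L -> 0 <= f x) -> 0 <= lsum f L.
Proof. induction L; simpl; intros H; [lra|]. pose proof (H a (or_introl eq_refl)). pose proof (IHL (fun x h => H x (or_intror h))). lra. Qed.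

Lemma lsum_le {A} (f g : A -> R) L : (forall x, In x L -> f x <= g x) -> lsum f L <= lsum g L.
Proof. induction L; simpl; intros H; [lra|]. pose proof (H a (or_introl eq_refl)). pose proof (IHL (fun x h => H x (or_intror h))). lra. Qed.

Lemma lsum_plus {A} (f g : A -> R) L : lsum (fun x => f x + g x) L = lsum f L + lsum g L.
Proof. induction L; simpl; [ring| rewrite IHL; ring]. Qed.

Lemma lsum_scal {A} (c : R) (f : A -> R) L : lsum (fun x => c * f x) L = c * lsum f L.
Proof. induction L; simpl; [ring| rewrite IHL; ring]. Qed.

Lemma lsum_map {A B} (f : B -> R) (g : A -> B) L : lsum f (map g L) = lsum (fun x => f (g x)) L.
Proof. induction L; simpl; auto. rewrite IHL; auto. Qed.

Lemma lsum_flat_map {A B} (f : B -> R) (g : A -> list B) L :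
  lsum f (flat_map g L) = lsum (fun x => lsum f (g x)) L.
Proof. induction L; simpl; auto. rewrite lsum_app, IHL; auto. Qed.

Lemma lsum_filter {A} (f : A -> R) (b : A -> bool) L :
  lsum (fun x => if b x then f x else 0) L = lsum f (filter b L).
Proof. induction L; simpl; auto. destruct (b a); simpl; rewrite IHL; ring. Qed.

Lemma lsum_filter_split {A} (f : A -> R) (b c : A -> bool) L :
  lsum f (filter b L) = lsum f (filter (fun x => b x && c x) L) + lsum f (filter (fun x => b x && negb (c x)) L).
Proof. induction L; simpl; [ring|]. destruct (b a), (c a); simpl; rewrite IHL; ring. Qed.

Lemma lsum_perm {A} (f : A -> R) L1 L2 : Permutation L1 L2 -> lsum f L1 = lsum f L2.
Proof. induction 1; simpl; try lra. Qed.

Lemma lsum_term {A} (f : A -> R) L x : (forall y, In y L -> 0 <= f y) -> In x L -> f x <= lsum f L.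
Proof.
  induction L; simpl; intros H Hx; [contradiction|].
  destruct Hx as [<-|Hx].
  - pose proof (lsum_nonneg f L (fun y h => H y (or_intror h))). lra.
  - pose proof (H a (or_introl eq_refl)). pose proof (IHL (fun y h => H y (or_intror h)) Hx). lra.
Qed.

Lemma lsum_pos_ex {A} (f : A -> R) L : lsum f L <> 0 -> exists x, In x L /\ f x <> 0.
Proof.
  induction L; simpl; intros H; [lra|].
  destruct (Req_EM_T (f a) 0) as [e|e].
  - destruct IHL as [x [h1 h2]]; [lra|]. eauto.
  - eauto.
Qed.

Definition list_prodR {A B} (L1 : list A) (L2 : list B) := flat_map (fun x => map (fun y => (x,y)) L2) L1.

Lemma lsum_prod {A B} (f : A -> R) (g : B -> R) L1 L2 :
  lsum f L1 * lsum g L2 = lsum (fun p => f (fst p) * g (snd p)) (list_prodR L1 L2).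
Proof.
  unfold list_prodR. rewrite lsum_flat_map. induction L1; simpl; [ring|].
  rewrite <- IHL1, lsum_map. simpl. rewrite lsum_scal. ring.
Qed.

Lemma In_prodR {A B} (L1 : list A) (L2 : list B) x y : In (x,y) (list_prodR L1 L2) <-> In x L1 /\ In y L2.
Proof.
  unfold list_prodR. rewrite in_flat_map. split.
  - intros [z [h1 h2]]. apply in_map_iff in h2. destruct h2 as [y' [e h]]. inversion e; subst; auto.
  - intros [h1 h2]. exists x. split; auto. apply in_map_iff. eauto.
Qed.

Lemma NoDup_flat_map {A B} (g : A -> list B) L :
  NoDup L -> (forall x, NoDup (g x)) ->
  (forall x1 x2 z, In z (g x1) -> In z (g x2) -> x1 = x2) -> NoDup (flat_map g L).
Proof.
  induction L; simpl; intros HL Hg Hd; [constructor|].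
  inversion HL; subst. apply NoDup_app; auto.
  intros z h1 h2. apply in_flat_map in h2. destruct h2 as [x [hx hz]].
  assert (a = x) by (eapply Hd; eauto). subst; contradiction.
Qed.

Lemma NoDup_prodR {A B} (L1 : list A) (L2 : list B) : NoDup L1 -> NoDup L2 -> NoDup (list_prodR L1 L2).
Proof.
  intros h1 h2. apply NoDup_flat_map; auto.
  - intros x. apply FinFun.Injective_map_NoDup; auto. intros y y' e; inversion e; auto.
  - intros x1 x2 z i1 i2. apply in_map_iff in i1, i2. destruct i1 as [? [<- _]]. destruct i2 as [? [e _]]. inversion e; auto.
Qed.

Lemma min_exists {A} (L : list A) (Pr : A -> Prop) (f : A -> R) :
  (exists x, In x L /\ Pr x) -> exists x, In x L /\ Pr x /\ forall y, In y L -> Pr y -> f x <= f y.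
Proof.
  induction L as [|a L IH]; simpl; intros [x [hx hp]]; [contradiction|].
  destruct (classic (exists x, In x L /\ Pr x)) as [E|NE].
  - destruct (IH E) as [y [hy [py my]]].
    destruct (classic (Pr a /\ f a <= f y)) as [[pa le]|na].
    + exists a. split; auto. split; auto. intros z [<-|hz] pz; [lra|]. specialize (my z hz pz). lra.
    + exists y. split; auto. split; auto. intros z [<-|hz] pz; auto.
      apply Rnot_lt_le. intro lt. apply na. split; auto. lra.
  - destruct hx as [<-|hx]; [|exfalso; apply NE; eauto].
    exists a. split; auto. split; auto. intros z [<-|hz] pz; [lra|]. exfalso; apply NE; eauto.
Qed.

Lemma argmin_exists {A} (L : list A) (f : A -> R) (x0 : A) :
  In x0 L -> exists x, In x L /\ forall y, In y L -> f x <= f y.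
Proof.
  intros h. destruct (min_exists L (fun _ => True) f) as [x [hx [_ hm]]].
  { exists x0; auto. }
  exists x; split; auto.
Qed.

Lemma argmax_exists {A} (L : list A) (f : A -> R) (x0 : A) :
  In x0 L -> exists x, In x L /\ forall y, In y L -> f y <= f x.
Proof.
  intros h. destruct (argmin_exists L (fun x => - f x) x0 h) as [x [hx hm]].
  exists x; split; auto. intros y hy. specialize (hm y hy). lra.
Qed.

Lemma pos_min_exists {A} (L : list A) (f : A -> R) :
  exists c, 0 < c /\ forall x, In x L -> 0 < f x -> c <= f x.
Proof.
  induction L as [|a L [c [hc hm]]]; simpl.
  - exists 1; split; [lra| tauto].
  - destruct (Rlt_dec 0 (f a)).
    + exists (Rmin c (f a)). split. apply Rmin_pos; auto.
      intros x [<-|hx] hp; [apply Rmin_r|]. eapply Rle_trans; [apply Rmin_l| auto].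
    + exists c. split; auto. intros x [<-|hx] hp; [contradiction| auto].
Qed.

Fixpoint pathprod (f : nat -> nat -> R) (l : list nat) : R :=
  match l with
  | x :: ((y :: _) as l') => f x y * pathprod f l'
  | _ => 1
  end.

Lemma pathprod_split f a y c : pathprod f (a ++ y :: c) = pathprod f (a ++ [y]) * pathprod f (y :: c).
Proof.
  induction a as [|z a IH]; [simpl; ring|].
  destruct a as [|z' a']; simpl in *; [ring|]. rewrite IH. ring.
Qed.

Lemma cost_split w a y c : cost w (a ++ y :: c) = cost w (a ++ [y]) + cost w (y :: c).
Proof.
  induction a as [|z a IH]; [simpl; ring|].
  destruct a as [|z' a']; simpl in *; [ring|]. rewrite IH. ring.
Qed.

Lemma chain_split P a y c : chain P (a ++ y :: c) <-> chain P (a ++ [y]) /\ chain P (y :: c).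
Proof.
  induction a as [|z a IH]; [simpl; tauto|].
  destruct a as [|z' a']; simpl in *; [tauto|]. rewrite IH. tauto.
Qed.

Lemma last_indep (y : nat) l d1 d2 : last (y :: l) d1 = last (y :: l) d2.
Proof. revert y; induction l; intros y; [reflexivity|]. simpl. apply IHl. Qed.

Lemma last_app_cons (a : list nat) y c d : last (a ++ y :: c) d = last (y :: c) d.
Proof. induction a; [reflexivity|]. rewrite <- IHa. change ((a::a0) ++ y :: c) with (a :: (a0 ++ y :: c)).
 destruct (a0 ++ y :: c) eqn:E; [destruct a0; discriminate| reflexivity]. Qed.

Lemma last_snoc (a : list nat) y d : last (a ++ [y]) d = y.
Proof. rewrite last_app_cons. reflexivity. Qed.

Lemma wt_eq P w a l : 0 < a ->
  pathprod (Palpha P w a) l = pathprod P l * Rpower a (cost w l).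
Proof.
  intros ha. induction l as [|x l IH]; simpl.
  - rewrite Rpower_O; auto; ring.
  - destruct l as [|y l']; simpl. rewrite Rpower_O; auto; ring.
    simpl in IH. rewrite IH. unfold Palpha. rewrite Rpower_plus. ring.
Qed.


Lemma cost_nonneg n P w l :
  (forall i j, (i < n)%nat -> (j < n)%nat -> edge P i j -> 0 < w i j) ->
  chain P l -> Forall (fun v => (v < n)%nat) l -> 0 <= cost w l.
Proof.
  intros Hw. induction l as [|x l IH]; simpl; [lra|].
  destruct l as [|y l']; [lra|]. intros [e c] F. inversion F; subst. inversion H2; subst.
  pose proof (Hw x y H1 H3 e). pose proof (IH c H2). lra.
Qed.

Lemma cost_pos n P w x y l :
  (forall i j, (i < n)%nat -> (j < n)%nat -> edge P i j -> 0 < w i j) ->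
  chain P (x :: y :: l) -> Forall (fun v => (v < n)%nat) (x :: y :: l) -> 0 < cost w (x :: y :: l).
Proof.
  intros Hw [e c] F. simpl. inversion F; subst. inversion H2; subst.
  pose proof (Hw x y H1 H3 e). pose proof (cost_nonneg n P w (y :: l) Hw c H2). simpl in H0. lra.
Qed.

Lemma pr_nonneg n P l :
  (forall i j, (i < n)%nat -> (j < n)%nat -> 0 <= P i j) ->
  Forall (fun v => (v < n)%nat) l -> 0 <= pathprod P l.
Proof.
  intros HP. induction l as [|x l IH]; simpl; [lra|].
  destruct l as [|y l']; [lra|]. intros F. inversion F; subst. inversion H2; subst.
  pose proof (HP x y H1 H3). pose proof (IH H2). simpl in H0. apply Rmult_le_pos; auto.
Qed.

Lemma pr_pos P l : chain P l -> 0 < pathprod P l.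
Proof.
  induction l as [|x l IH]; simpl; [lra|].
  destruct l as [|y l']; [lra|]. intros [e c]. unfold edge in e. pose proof (IH c). apply Rmult_lt_0_compat; auto.
Qed.

Lemma pr_chain n P l :
  (forall i j, (i < n)%nat -> (j < n)%nat -> 0 <= P i j) ->
  Forall (fun v => (v < n)%nat) l -> pathprod P l <> 0 -> chain P l.
Proof.
  intros HP. induction l as [|x l IH]; simpl; [auto|].
  destruct l as [|y l']; [auto|]. intros F hne. inversion F; subst. inversion H2; subst.
  pose proof (HP x y H1 H3).
  split.
  - unfold edge. destruct (Req_EM_T (P x y) 0) as [e|e]; [rewrite e in hne; lra| lra].
  - apply IH; auto. intro h. apply hne. change (P x y * pathprod P (y :: l') = 0). rewrite h. ring.
Qed.

Fixpoint allL (E : list nat) (k : nat) : list (list nat) :=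
  match k with
  | O => [[]]
  | S k => flat_map (fun y => map (cons y) (allL E k)) E
  end.

Lemma In_allL E k l : In l (allL E k) <-> length l = k /\ forall x, In x l -> In x E.
Proof.
  revert l; induction k as [|k IH]; intros l; simpl.
  - split. intros [<-|[]]; simpl; tauto. intros [h _]. destruct l; simpl in h; [auto| discriminate].
  - rewrite in_flat_map. split.
    + intros [y [hy hl]]. apply in_map_iff in hl. destruct hl as [l' [<- hl']].
      apply IH in hl'. destruct hl' as [h1 h2]. simpl. split; [lia|]. intros x [<-|hx]; auto.
    + intros [h1 h2]. destruct l as [|y l']; simpl in h1; [discriminate|].
      exists y. split; [apply h2; simpl; auto|]. apply in_map. apply IH. split; [lia|].
      intros x hx. apply h2. simpl; auto.
Qed.

Lemma NoDup_allL E k : NoDup E -> NoDup (allL E k).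
Proof.
  intros hE. induction k as [|k IH]; simpl.
  - constructor; [simpl; tauto| constructor].
  - apply NoDup_flat_map; auto.
    + intros y. apply FinFun.Injective_map_NoDup; auto. intros l1 l2 e; inversion e; auto.
    + intros x1 x2 z i1 i2. apply in_map_iff in i1, i2. destruct i1 as [? [<- _]]. destruct i2 as [? [e _]]. inversion e; auto.
Qed.

Definition is_walk (n : nat) (P : nat -> nat -> R) (s t : nat) (W : list nat) : Prop :=
  (exists rest, W = s :: rest) /\ last W s = t /\ Forall (fun v => (v < n)%nat) W /\ chain P W.

Lemma last_In (l : list nat) d : l <> [] -> In (last l d) l.
Proof.
  intros h. destruct (exists_last h) as [a [y ->]]. rewrite last_snoc. apply in_or_app; simpl; auto.
Qed.

Lemma loop_removal n P w s t :
  (forall i j, (i < n)%nat -> (j < n)%nat -> edge P i j -> 0 < w i j) ->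
  forall W, is_walk n P s t W -> exists p, is_path n P s t p /\ cost w p <= cost w W /\
     (~ NoDup W -> cost w p < cost w W).
Proof.
  intros Hw W. remember (length W) as k. revert W Heqk.
  induction k as [k IH] using (well_founded_induction lt_wf). intros W Hk HW.
  destruct (NoDup_dec Nat.eq_dec W) as [ND|ND].
  - exists W. destruct HW as [h1 [h2 [h3 h4]]]. split; [repeat split; auto|]. split; [lra|tauto].
  - destruct (not_NoDup Nat.eq_decidable ND) as [x [a [b [c E]]]].
    destruct HW as [[rest Hr] [Hl [HF Hc]]].
    set (W' := a ++ x :: c).
    assert (HF' : Forall (fun v => (v < n)%nat) W').
    { rewrite Forall_forall in *. intros y hy. apply HF. rewrite E. unfold W' in hy.
      apply in_app_iff in hy. apply in_app_iff. destruct hy as [hy|[<-|hy]]; [auto|right; simpl; auto|].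
      right. simpl. right. apply in_or_app. right. simpl. auto. }
    rewrite E in Hc. apply chain_split in Hc. destruct Hc as [Hc1 Hc2].
    change (x :: b ++ x :: c) with ((x :: b) ++ x :: c) in Hc2.
    apply chain_split in Hc2. destruct Hc2 as [Hc2 Hc3].
    assert (HW' : is_walk n P s t W').
    { split; [|split; [|split]].
      - destruct a as [|z a']; rewrite E in Hr; inversion Hr; subst; unfold W'; simpl; eauto.
      - unfold W'. rewrite last_app_cons. rewrite E in Hl. rewrite last_app_cons in Hl.
        change (x :: b ++ x :: c) with ((x :: b) ++ x :: c) in Hl. rewrite last_app_cons in Hl. auto.
      - exact HF'.
      - unfold W'. apply chain_split. auto. }
    assert (Hcost : cost w W = cost w W' + cost w ((x :: b) ++ [x])).
    { rewrite E. unfold W'. rewrite (cost_split w a x (b ++ x :: c)), (cost_split w a x c).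
      change (x :: b ++ x :: c) with ((x :: b) ++ x :: c). rewrite (cost_split w (x :: b) x c). ring. }
    assert (Hpos : 0 < cost w ((x :: b) ++ [x])).
    { assert (HFc : Forall (fun v => (v < n)%nat) ((x :: b) ++ [x])).
      { rewrite Forall_forall in *. intros y hy. apply HF. rewrite E. apply in_or_app. right.
        simpl in hy |- *. destruct hy as [<-|hy]; auto. right. apply in_app_iff in hy. apply in_or_app.
        destruct hy as [hy|[<-|[]]]; auto. right; simpl; auto. }
      destruct b as [|y b']; simpl in *.
      - eapply (cost_pos n P w x x []); eauto.
      - eapply (cost_pos n P w x y (b' ++ [x])); eauto. }
    assert (Hlen : (length W' < k)%nat).
    { subst k. rewrite E. unfold W'. rewrite !length_app. simpl. rewrite length_app. simpl. lia. }
    destruct (IH _ Hlen W' eq_refl HW') as [p [hp [hc _]]].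
    exists p. split; auto. split; intros; lra.
Qed.

Lemma path_walk n P s t p : is_path n P s t p -> is_walk n P s t p.
Proof. intros [h1 [h2 [h3 [h4 h5]]]]. repeat split; auto. Qed.

Lemma shortest_exists n P w s t :
  (exists p, is_path n P s t p) -> exists p, shortest_path n P w s t p.
Proof.
  intros [p hp].
  set (Cand := flat_map (allL (seq 0 n)) (seq 0 (S n))).
  assert (HC : forall q, is_path n P s t q -> In q Cand).
  { intros q [_ [_ [hnd [hf _]]]]. unfold Cand. apply in_flat_map. exists (length q).
    assert (incl q (seq 0 n)).
    { intros y hy. rewrite Forall_forall in hf. apply in_seq. specialize (hf y hy). lia. }
    split.
    - apply in_seq. pose proof (NoDup_incl_length hnd H). rewrite length_seq in H0. lia.
    - apply In_allL. split; auto. }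
  destruct (min_exists Cand (is_path n P s t) (cost w)) as [p0 [_ [h1 h2]]]; eauto.
  exists p0. split; auto.
Qed.

Lemma shortcut n P w s t A u v B y C :
  (forall i j, (i < n)%nat -> (j < n)%nat -> edge P i j -> 0 < w i j) ->
  shortest_path n P w s t (A ++ u :: v :: B ++ y :: C) -> edge P u y -> w u v < w u y.
Proof.
  intros Hw [Hp Hmin] Huy.
  pose proof (path_walk _ _ _ _ _ Hp) as [[rest Hr] [Hl [HF Hc]]].
  set (W := A ++ u :: y :: C).
  apply chain_split in Hc. destruct Hc as [Hc1 Hc2].
  change (u :: v :: B ++ y :: C) with ((u :: v :: B) ++ y :: C) in Hc2.
  apply chain_split in Hc2. destruct Hc2 as [Hc2 Hc3].
  assert (HW : is_walk n P s t W).
  { split; [|split; [|split]].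
    - destruct A as [|z A']; inversion Hr; subst; unfold W; simpl; eauto.
    - unfold W. rewrite last_app_cons. rewrite last_app_cons in Hl.
      change (u :: v :: B ++ y :: C) with ((u :: v :: B) ++ y :: C) in Hl. rewrite last_app_cons in Hl.
      rewrite <- Hl. reflexivity.
    - rewrite Forall_forall in *. intros z hz. apply HF. unfold W in hz.
      apply in_app_iff in hz. apply in_app_iff. destruct hz as [hz|[<-|[<-|hz]]]; [auto|right; simpl; auto| |].
      + right. simpl. right. right. apply in_or_app. right. simpl. auto.
      + right. simpl. right. right. apply in_or_app. right. simpl. auto.
    - unfold W. apply chain_split. split; auto. simpl. split; auto. }
  destruct (loop_removal n P w s t Hw W HW) as [q [hq [hc _]]].
  pose proof (Hmin q hq).
  assert (HFs : Forall (fun z => (z < n)%nat) (v :: B ++ [y])).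
  { rewrite Forall_forall in *. intros z hz. apply HF. apply in_or_app. right. simpl. right.
    simpl in hz. destruct hz as [<-|hz]; auto. apply in_app_iff in hz. right. apply in_or_app.
    destruct hz as [hz|[<-|[]]]; auto. right; simpl; auto. }
  assert (Hseg : 0 < cost w (v :: B ++ [y])).
  { destruct B as [|b B']; simpl.
    - eapply (cost_pos n P w v y []); eauto. simpl in Hc2 |- *; tauto.
    - eapply (cost_pos n P w v b (B' ++ [y])); eauto. exact (proj2 Hc2). }
  assert (E1 : cost w (A ++ u :: v :: B ++ y :: C) = cost w (A ++ [u]) + (w u v + cost w (v :: B ++ [y])) + cost w (y :: C)).
  { rewrite (cost_split w A u). change (u :: v :: B ++ y :: C) with ((u :: v :: B) ++ y :: C).
    rewrite (cost_split w (u :: v :: B) y C). simpl. ring. }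
  assert (E2 : cost w W = cost w (A ++ [u]) + w u y + cost w (y :: C)).
  { unfold W. rewrite (cost_split w A u). simpl. ring. }
  lra.
Qed.

Lemma same_vertices_eq n P w s t p1 p2 :
  (forall i j, (i < n)%nat -> (j < n)%nat -> edge P i j -> 0 < w i j) ->
  shortest_path n P w s t p1 -> shortest_path n P w s t p2 ->
  (forall m, In m p1 <-> In m p2) -> p1 = p2.
Proof.
  intros Hw S1 S2 Hv.
  assert (Hgen : forall r1 A u r2, p1 = A ++ u :: r1 -> p2 = A ++ u :: r2 -> r1 = r2).
  { induction r1 as [|v r1 IH]; intros A u r2 E1 E2.
    - destruct r2 as [|z r2]; auto. exfalso.
      destruct S1 as [[_ [L1 _]] _]. destruct S2 as [[_ [L2 [N2 _]]] _].
      rewrite E1, last_snoc in L1. rewrite E2, last_app_cons in L2.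
      rewrite E2 in N2. apply NoDup_remove_2 in N2. apply N2. apply in_or_app. right.
      rewrite L1, <- L2. change (last (u :: z :: r2) s) with (last (z :: r2) s). apply last_In. discriminate.
    - destruct r2 as [|v' r2].
      + exfalso.
        destruct S2 as [[_ [L1 _]] _]. destruct S1 as [[_ [L2 [N2 _]]] _].
        rewrite E2, last_snoc in L1. rewrite E1, last_app_cons in L2.
        rewrite E1 in N2. apply NoDup_remove_2 in N2. apply N2. apply in_or_app. right.
        rewrite L1, <- L2. change (last (u :: v :: r1) s) with (last (v :: r1) s). apply last_In. discriminate.
      + destruct (Nat.eq_dec v v') as [<-|nv].
        * f_equal. apply (IH (A ++ [u]) v r2); rewrite <- app_assoc; auto.
        * exfalso.
          assert (K : forall q1 q2 a b r r', shortest_path n P w s t q1 -> shortest_path n P w s t q2 ->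
                    (forall m, In m q1 <-> In m q2) -> a <> b ->
                    q1 = A ++ u :: a :: r -> q2 = A ++ u :: b :: r' -> w u a < w u b).
          { intros q1 q2 a b r r' Q1 Q2 Hq nab F1 F2.
            assert (Hb : In b q1). { apply Hq. rewrite F2. apply in_or_app. right. simpl; auto. }
            assert (Nb : ~ In b ((A ++ [u]) ++ r')).
            { destruct Q2 as [[_ [_ [N _]]] _]. rewrite F2 in N.
              replace (A ++ u :: b :: r') with ((A ++ [u]) ++ b :: r') in N by (rewrite <- app_assoc; auto).
              apply NoDup_remove_2 in N. auto. }
            assert (Hbr : In b r).
            { rewrite F1 in Hb. apply in_app_iff in Hb. destruct Hb as [Hb|[<-|[<-|Hb]]]; auto;
              exfalso; apply Nb; rewrite <- app_assoc; apply in_or_app; simpl; auto. contradiction. }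
            destruct (in_split _ _ Hbr) as [B [C ->]].
            destruct Q2 as [[_ [_ [_ [_ Ch]]]] _]. rewrite F2 in Ch. apply chain_split in Ch.
            destruct Ch as [_ [Eub _]].
            eapply (shortcut n P w s t A u a B b C); eauto. rewrite <- F1. auto. }
          pose proof (K p1 p2 v v' r1 r2 S1 S2 Hv nv E1 E2).
          assert (Hv' : forall m, In m p2 <-> In m p1) by (intros; rewrite Hv; tauto).
          pose proof (K p2 p1 v' v r2 r1 S2 S1 Hv' (not_eq_sym nv) E2 E1). lra. }
  destruct S1 as [[[r1 E1] _] _]. destruct S2 as [[[r2 E2] _] _].
  rewrite E1, E2. f_equal. apply (Hgen r1 [] s r2); auto.
Qed.

Definition Tlist (n t : nat) := filter (fun k => negb (Nat.eqb k t)) (seq 0 n).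

Lemma In_Tlist n t x : In x (Tlist n t) <-> (x < n)%nat /\ x <> t.
Proof.
  unfold Tlist. rewrite filter_In, in_seq. rewrite negb_true_iff, Nat.eqb_neq. lia.
Qed.

Lemma fsum_lsum n f : fsum n f = lsum f (seq 0 n).
Proof. induction n; [reflexivity|]. change (fsum (S n) f) with (fsum n f + f n). rewrite seq_S, lsum_app, IHn. simpl. ring. Qed.

Lemma sumT_lsum n t f : sumT n t f = lsum f (Tlist n t).
Proof.
  unfold sumT, Tlist. rewrite fsum_lsum. rewrite <- lsum_filter. apply lsum_ext.
  intros x _. destruct (x =? t)%nat; simpl; auto.
Qed.

Lemma sumT_ext n t f g : (forall y, (y < n)%nat -> y <> t -> f y = g y) -> sumT n t f = sumT n t g.
Proof. intros H. rewrite !sumT_lsum. apply lsum_ext. intros x hx. apply In_Tlist in hx. apply H; tauto. Qed.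

Lemma sumT_le n t f g : (forall y, (y < n)%nat -> y <> t -> f y <= g y) -> sumT n t f <= sumT n t g.
Proof. intros H. rewrite !sumT_lsum. apply lsum_le. intros x hx. apply In_Tlist in hx. apply H; tauto. Qed.

Lemma sumT_nonneg n t f : (forall y, (y < n)%nat -> y <> t -> 0 <= f y) -> 0 <= sumT n t f.
Proof. intros H. rewrite !sumT_lsum. apply lsum_nonneg. intros x hx. apply In_Tlist in hx. apply H; tauto. Qed.

Lemma sumT_plus n t f g : sumT n t (fun y => f y + g y) = sumT n t f + sumT n t g.
Proof. rewrite !sumT_lsum. apply lsum_plus. Qed.

Lemma sumT_scal n t c f : sumT n t (fun y => c * f y) = c * sumT n t f.
Proof. rewrite !sumT_lsum. apply lsum_scal. Qed.

Definition Aop n t P w a (h : nat -> R) (x : nat) : R := sumT n t (fun y => Palpha P w a x y * h y).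
Definition iter n t P w a k (h : nat -> R) : nat -> R := Nat.iter k (Aop n t P w a) h.

Lemma iter_succ_r n t P w a k h : iter n t P w a (S k) h = iter n t P w a k (Aop n t P w a h).
Proof.
  unfold iter. induction k; simpl; auto. simpl in IHk. rewrite IHk. reflexivity.
Qed.

Lemma iter_ext_T n t P w a k h1 h2 :
  (forall y, (y < n)%nat -> y <> t -> h1 y = h2 y) ->
  forall x, (x < n)%nat -> x <> t -> iter n t P w a k h1 x = iter n t P w a k h2 x.
Proof.
  intros H. induction k; intros x hx ht; simpl; auto.
  unfold Aop. apply sumT_ext. intros y hy hyt. rewrite IHk; auto.
Qed.

Lemma iter_plus n t P w a k f g x :
  iter n t P w a k (fun y => f y + g y) x = iter n t P w a k f x + iter n t P w a k g x.
Proof.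
  revert x; induction k; intros x; simpl; auto.
  unfold Aop. rewrite <- sumT_plus. apply sumT_ext. intros y _ _. rewrite IHk. ring.
Qed.

Lemma iter_scal n t P w a k c f x :
  iter n t P w a k (fun y => c * f y) x = c * iter n t P w a k f x.
Proof.
  revert x; induction k; intros x; simpl; auto.
  unfold Aop. rewrite <- sumT_scal. apply sumT_ext. intros y _ _. rewrite IHk. ring.
Qed.

Lemma iter_walk n t P w a k h x :
  iter n t P w a k h x =
  lsum (fun l => pathprod (Palpha P w a) (x :: l) * h (last (x :: l) x)) (allL (Tlist n t) k).
Proof.
  revert x; induction k; intros x.
  - simpl. ring.
  - change (iter n t P w a (S k) h x) with (Aop n t P w a (iter n t P w a k h) x).
    unfold Aop. rewrite sumT_lsum. simpl allL. rewrite lsum_flat_map.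
    apply lsum_ext. intros y _. rewrite IHk, lsum_map, <- lsum_scal. apply lsum_ext.
    intros l _. simpl pathprod at 2. rewrite (last_indep y l y x). simpl. ring.
Qed.

Lemma expansion n t P w a (c v : nat -> R) :
  (forall x, (x < n)%nat -> x <> t -> v x = c x + Aop n t P w a v x) ->
  forall K x, (x < n)%nat -> x <> t ->
    v x = fsum K (fun k => iter n t P w a k c x) + iter n t P w a K v x.
Proof.
  intros H K. induction K; intros x hx ht; simpl; [ring|].
  rewrite (IHK x hx ht).
  rewrite (iter_ext_T n t P w a K v (fun y => c y + Aop n t P w a v y) H x hx ht).
  rewrite iter_plus. rewrite <- iter_succ_r. simpl. ring.
Qed.

Lemma Rpower_anti a e1 e2 : 0 < a < 1 -> e1 <= e2 -> Rpower a e2 <= Rpower a e1.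
Proof.
  intros [h0 h1] he. unfold Rpower. apply exp_le_3 || idtac.
  destruct (Req_dec e1 e2) as [<-|ne]; [lra|].
  left. apply exp_increasing. assert (ln a < 0). { rewrite <- ln_1. apply ln_increasing; lra. } nra.
Qed.

Lemma fsum_le n f g : (forall y, (y < n)%nat -> f y <= g y) -> fsum n f <= fsum n g.
Proof. induction n; simpl; intros H; [lra|]. pose proof (H n (Nat.lt_succ_diag_r n)). pose proof (IHn (fun y h => H y (Nat.lt_lt_succ_r _ _ h))). lra. Qed.

Lemma fsum_scal n c f : fsum n (fun y => c * f y) = c * fsum n f.
Proof. induction n; simpl; [ring|]. rewrite IHn; ring. Qed.

Lemma sumT_le_fsum n t f : (forall y, (y < n)%nat -> 0 <= f y) -> sumT n t f <= fsum n f.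
Proof. intros H. unfold sumT. apply fsum_le. intros y hy. destruct (y =? t)%nat; [apply H; auto| lra]. Qed.

Lemma Palpha_nonneg n P w a x y :
  (forall i j, (i < n)%nat -> (j < n)%nat -> 0 <= P i j) -> (x < n)%nat -> (y < n)%nat -> 0 <= Palpha P w a x y.
Proof. intros HP hx hy. unfold Palpha. apply Rmult_le_pos; [auto| left; apply exp_pos]. Qed.

Lemma row_bound n t P w a wmin x :
  0 < a < 1 ->
  (forall i j, (i < n)%nat -> (j < n)%nat -> 0 <= P i j) ->
  (forall i, (i < n)%nat -> fsum n (P i) = 1) ->
  (forall i j, (i < n)%nat -> (j < n)%nat -> edge P i j -> wmin <= w i j) ->
  (x < n)%nat -> sumT n t (fun y => Palpha P w a x y) <= Rpower a wmin.
Proof.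
  intros ha HP Hs Hm hx.
  eapply Rle_trans; [apply sumT_le_fsum; intros; apply (Palpha_nonneg n); auto|].
  eapply Rle_trans; [apply (fsum_le n _ (fun y => Rpower a wmin * P x y))|].
  - intros y hy. unfold Palpha. pose proof (HP x y hx hy).
    destruct (Req_dec (P x y) 0) as [e|e]; [rewrite e; lra|].
    assert (edge P x y) by (unfold edge; lra).
    pose proof (Rpower_anti a wmin (w x y) ha (Hm x y hx hy H0)). nra.
  - rewrite fsum_scal, Hs; auto. lra.
Qed.

Lemma iter_bound n t P w a wmin h M :
  0 < a < 1 ->
  (forall i j, (i < n)%nat -> (j < n)%nat -> 0 <= P i j) ->
  (forall i, (i < n)%nat -> fsum n (P i) = 1) ->
  (forall i j, (i < n)%nat -> (j < n)%nat -> edge P i j -> wmin <= w i j) ->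
  (forall y, (y < n)%nat -> y <> t -> 0 <= h y <= M) ->
  forall k x, (x < n)%nat -> x <> t -> 0 <= iter n t P w a k h x <= (Rpower a wmin) ^ k * M.
Proof.
  intros ha HP Hs Hm Hh k. induction k; intros x hx ht.
  - simpl. rewrite Rmult_1_l. auto.
  - change (iter n t P w a (S k) h x) with (Aop n t P w a (iter n t P w a k h) x). unfold Aop.
    split.
    + apply sumT_nonneg. intros y hy hyt. apply Rmult_le_pos; [apply (Palpha_nonneg n); auto| apply IHk; auto].
    + eapply Rle_trans; [apply (sumT_le _ _ _ (fun y => Palpha P w a x y * (Rpower a wmin ^ k * M)))|].
      * intros y hy hyt. apply Rmult_le_compat_l; [apply (Palpha_nonneg n); auto| apply IHk; auto].
      * rewrite (sumT_ext n t _ (fun y => (Rpower a wmin ^ k * M) * Palpha P w a x y)) by (intros; ring).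
        rewrite sumT_scal. pose proof (row_bound n t P w a wmin x ha HP Hs Hm hx).
        assert (0 <= Rpower a wmin ^ k * M).
        { destruct (IHk x hx ht). lra. }
        replace (Rpower a wmin ^ S k * M) with ((Rpower a wmin ^ k * M) * Rpower a wmin) by (simpl; ring).
        apply Rmult_le_compat_l; auto.
Qed.

Lemma maxprin n t P w a wmin s (c v : nat -> R) B :
  0 < a < 1 -> Rpower a wmin <= 1/2 ->
  (forall i j, (i < n)%nat -> (j < n)%nat -> 0 <= P i j) ->
  (forall i, (i < n)%nat -> fsum n (P i) = 1) ->
  (forall i j, (i < n)%nat -> (j < n)%nat -> edge P i j -> wmin <= w i j) ->
  (s < n)%nat -> s <> t ->
  (forall x, (x < n)%nat -> x <> t -> v x = c x + Aop n t P w a v x) ->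
  (forall x, (x < n)%nat -> x <> t -> 0 <= c x <= B) ->
  forall x, (x < n)%nat -> x <> t -> 0 <= v x <= 2 * B.
Proof.
  intros ha hr HP Hs Hm hs hst Hv Hc.
  assert (sT : In s (Tlist n t)) by (apply In_Tlist; auto).
  destruct (argmin_exists (Tlist n t) v s sT) as [xm [hxm Hmin]].
  destruct (argmax_exists (Tlist n t) v s sT) as [xM [hxM Hmax]].
  apply In_Tlist in hxm, hxM.
  assert (Hsum : forall x, (x < n)%nat -> 0 <= sumT n t (fun y => Palpha P w a x y) <= 1/2).
  { intros x hx. split; [apply sumT_nonneg; intros; apply (Palpha_nonneg n); auto|].
    eapply Rle_trans; [apply (row_bound n t P w a wmin x); auto| auto]. }
  assert (L : 0 <= v xm).
  { pose proof (Hv xm (proj1 hxm) (proj2 hxm)). unfold Aop in H.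
    assert (sumT n t (fun y => Palpha P w a xm y * v y) >= v xm * sumT n t (fun y => Palpha P w a xm y)).
    { rewrite <- sumT_scal. apply Rle_ge. apply sumT_le. intros y hy hyt.
      assert (v xm <= v y) by (apply Hmin, In_Tlist; auto).
      pose proof (Palpha_nonneg n P w a xm y HP (proj1 hxm) hy). nra. }
    pose proof (Hc xm (proj1 hxm) (proj2 hxm)). pose proof (Hsum xm (proj1 hxm)). nra. }
  assert (U : v xM <= 2 * B).
  { pose proof (Hv xM (proj1 hxM) (proj2 hxM)). unfold Aop in H.
    assert (sumT n t (fun y => Palpha P w a xM y * v y) <= v xM * sumT n t (fun y => Palpha P w a xM y)).
    { rewrite <- sumT_scal. apply sumT_le. intros y hy hyt.
      assert (v y <= v xM) by (apply Hmax, In_Tlist; auto).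
      pose proof (Palpha_nonneg n P w a xM y HP (proj1 hxM) hy). nra. }
    assert (0 <= v xM) by (assert (v xm <= v xM) by (apply Hmax, In_Tlist; auto); lra).
    pose proof (Hc xM (proj1 hxM) (proj2 hxM)). pose proof (Hsum xM (proj1 hxM)). nra. }
  intros x hx ht. assert (In x (Tlist n t)) by (apply In_Tlist; auto).
  pose proof (Hmin x H). pose proof (Hmax x H). lra.
Qed.

Definition D01 (a : R) : Prop := 0 < a < 1.

Lemma adh01 : adhDa D01 0.
Proof.
  unfold adhDa, D01, R_dist. intros alp ha. exists (Rmin (alp/2) (1/2)).
  assert (0 < Rmin (alp/2) (1/2)) by (apply Rmin_pos; lra).
  pose proof (Rmin_l (alp/2) (1/2)). pose proof (Rmin_r (alp/2) (1/2)).
  split; [lra|]. rewrite Rminus_0_r, Rabs_pos_eq; lra.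
Qed.

Lemma lim_const (c : R) : limit1_in (fun _ => c) D01 c 0.
Proof.
  unfold limit1_in, limit_in. simpl. unfold R_dist. intros eps he. exists 1. split; [lra|].
  intros. rewrite Rminus_diag, Rabs_R0. auto.
Qed.

Lemma lim_ext (f g : R -> R) l : limit1_in f D01 l 0 -> (forall a, D01 a -> f a = g a) -> limit1_in g D01 l 0.
Proof.
  unfold limit1_in, limit_in. simpl. intros H E eps he. destruct (H eps he) as [alp [ha Hf]].
  exists alp. split; auto. intros x [hx hd]. rewrite <- E; auto.
Qed.

Lemma Rpower_pos a x : 0 < Rpower a x.
Proof. apply exp_pos. Qed.

Lemma Rpower_base_lt a b x : 0 < a -> a < b -> 0 < x -> Rpower a x < Rpower b x.
Proof.
  intros h0 h1 hx. unfold Rpower. apply exp_increasing. apply Rmult_lt_compat_l; auto. apply ln_increasing; auto.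
Qed.

Lemma Rpower_lim0 x : 0 < x -> limit1_in (fun a => Rpower a x) D01 0 0.
Proof.
  intros hx. unfold limit1_in, limit_in. simpl. unfold R_dist, D01. intros eps he.
  exists (Rpower eps (/ x)). split; [apply Rpower_pos|].
  intros a [[ha1 ha2] hd]. rewrite Rminus_0_r in *. rewrite Rabs_pos_eq in hd by lra.
  rewrite Rabs_pos_eq by (left; apply Rpower_pos).
  replace eps with (Rpower (Rpower eps (/ x)) x).
  - apply Rpower_base_lt; auto.
  - rewrite Rpower_mult. rewrite Rinv_l by lra. apply Rpower_1; auto.
Qed.

Lemma lim_bound (f : R -> R) d0 M x :
  0 < d0 -> 0 < x -> (forall a, 0 < a < 1 -> a < d0 -> Rabs (f a) <= M * Rpower a x) ->
  limit1_in f D01 0 0.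
Proof.
  intros hd hx H. pose proof (Rpower_lim0 x hx) as L.
  unfold limit1_in, limit_in in *. simpl in *. unfold R_dist, D01 in *. intros eps he.
  assert (hM : 0 < Rabs M + 1) by (pose proof (Rabs_pos M); lra).
  destruct (L (eps / (Rabs M + 1))) as [alp [ha Hl]]. { apply Rdiv_lt_0_compat; lra. }
  exists (Rmin d0 alp). split; [apply Rmin_pos; auto|].
  intros a [hD hdist]. rewrite Rminus_0_r in *.
  assert (a < d0) by (rewrite Rabs_pos_eq in hdist by lra; pose proof (Rmin_l d0 alp); lra).
  assert (Rabs a < alp) by (pose proof (Rmin_r d0 alp); lra).
  rewrite <- (Rminus_0_r a) in H1. specialize (Hl a (conj hD H1)). rewrite Rminus_0_r, Rabs_pos_eq in Hl by (left; apply Rpower_pos).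
  specialize (H a hD H0). pose proof (Rpower_pos a x).
  assert (M * Rpower a x <= Rabs M * Rpower a x) by (apply Rmult_le_compat_r; [lra| apply Rle_abs]).
  assert (Rabs M * Rpower a x <= (Rabs M + 1) * Rpower a x) by (apply Rmult_le_compat_r; lra).
  assert ((Rabs M + 1) * Rpower a x < (Rabs M + 1) * (eps / (Rabs M + 1))) by (apply Rmult_lt_compat_l; lra).
  replace ((Rabs M + 1) * (eps / (Rabs M + 1))) with eps in H5 by (field; lra). lra.
Qed.

Lemma Rpower_0_any a : Rpower a 0 = 1.
Proof. unfold Rpower. rewrite Rmult_0_l. apply exp_0. Qed.

Lemma list_lim {A} (L : list A) (c e : A -> R) D :
  (forall z, In z L -> c z <> 0 -> D <= e z) ->
  limit1_in (fun a => lsum (fun z => c z * Rpower a (e z)) L / Rpower a D) D01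
    (lsum (fun z => if Req_EM_T (e z) D then c z else 0) L) 0.
Proof.
  induction L as [|z L IH]; intros H; simpl.
  - apply (lim_ext (fun _ => 0)); [apply lim_const|]. intros a _. unfold Rdiv. ring.
  - assert (HD : forall a, Rpower a D <> 0) by (intros a; pose proof (Rpower_pos a D); lra).
    apply (lim_ext (fun a => c z * Rpower a (e z - D) + lsum (fun z => c z * Rpower a (e z)) L / Rpower a D)).
    2:{ intros a _. replace (e z) with ((e z - D) + D) at 2 by ring. rewrite Rpower_plus. field. auto. }
    apply limit_plus; [| apply IH; intros; apply H; simpl; auto].
    destruct (Req_EM_T (c z) 0) as [c0|c0].
    + rewrite c0. apply (lim_ext (fun _ => 0)). destruct (Req_EM_T (e z) D); apply lim_const.
      intros; ring.
    + pose proof (H z (or_introl eq_refl) c0).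
      destruct (Req_EM_T (e z) D) as [ee|ee].
      * apply (lim_ext (fun _ => c z)); [apply lim_const|]. intros a _. rewrite ee, Rminus_diag, Rpower_0_any. ring.
      * assert (hp : 0 < e z - D) by lra.
        pose proof (limit_mul _ _ D01 _ _ 0 (lim_const (c z)) (Rpower_lim0 _ hp)) as Hm.
        rewrite Rmult_0_r in Hm. exact Hm.
Qed.

Lemma pp_join f x l1 l2 : pathprod f (x :: l1 ++ l2) = pathprod f (x :: l1) * pathprod f (last (x :: l1) x :: l2).
Proof.
  revert x; induction l1 as [|z l1 IH]; intros x; [simpl; ring|].
  change (pathprod f (x :: (z :: l1) ++ l2)) with (f x z * pathprod f (z :: l1 ++ l2)).
  change (pathprod f (x :: z :: l1)) with (f x z * pathprod f (z :: l1)).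
  change (last (x :: z :: l1) x) with (last (z :: l1) x).
  rewrite IH. rewrite (last_indep z l1 z x). ring.
Qed.

Lemma cost_join w x l1 l2 : cost w (x :: l1 ++ l2) = cost w (x :: l1) + cost w (last (x :: l1) x :: l2).
Proof.
  revert x; induction l1 as [|z l1 IH]; intros x; [simpl; ring|].
  change (cost w (x :: (z :: l1) ++ l2)) with (w x z + cost w (z :: l1 ++ l2)).
  change (cost w (x :: z :: l1)) with (w x z + cost w (z :: l1)).
  change (last (x :: z :: l1) x) with (last (z :: l1) x).
  rewrite IH. rewrite (last_indep z l1 z x). ring.
Qed.

Lemma pp_snoc f x l y : pathprod f (x :: l ++ [y]) = pathprod f (x :: l) * f (last (x :: l) x) y.
Proof. rewrite pp_join. simpl. ring. Qed.

Lemma sumT_kdelta n t x g : (x < n)%nat -> x <> t -> sumT n t (fun k => kdelta x k * g k) = g x.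
Proof.
  intros hx ht. unfold sumT.
  assert (H : forall N, fsum N (fun k => if (k =? t)%nat then 0 else kdelta x k * g k) = if (x <? N)%nat then g x else 0).
  { induction N; simpl; auto. rewrite IHN. unfold kdelta.
    destruct (Nat.ltb_spec x N), (Nat.ltb_spec x (S N)); try lia;
    destruct (Nat.eqb_spec N t), (Nat.eqb_spec x N); subst; try lia; try ring. }
  rewrite H. destruct (Nat.ltb_spec x n); [auto| lia].
Qed.

Lemma fsum_term n f k : (forall y, (y < n)%nat -> 0 <= f y) -> (k < n)%nat -> f k <= fsum n f.
Proof.
  induction n; intros H hk; [lia|]. simpl.
  assert (0 <= fsum n f).
  { clear IHn hk. induction n; simpl; [lra|]. pose proof (H n ltac:(lia)). assert (0 <= fsum n f) by (apply IHn; intros; apply H; lia). lra. }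
  destruct (Nat.eq_dec k n) as [->|ne].
  - lra.
  - pose proof (IHn (fun y h => H y ltac:(lia)) ltac:(lia)). pose proof (H n ltac:(lia)). lra.
Qed.

Lemma fsum_le_INR K g : (forall k, (k < K)%nat -> 0 <= g k <= 1) -> 0 <= fsum K g <= INR K.
Proof.
  induction K; intros H; [simpl; lra|]. change (fsum (S K) g) with (fsum K g + g K). rewrite S_INR.
  pose proof (H K ltac:(lia)). pose proof (IHK (fun k h => H k ltac:(lia))). lra.
Qed.

Definition ALL n t K := flat_map (allL (Tlist n t)) (seq 0 K).

Lemma In_ALL n t K l : In l (ALL n t K) <-> (length l < K)%nat /\ forall x, In x l -> (x < n)%nat /\ x <> t.
Proof.
  unfold ALL. rewrite in_flat_map. split.
  - intros [k [hk hl]]. apply in_seq in hk. apply In_allL in hl. destruct hl as [h1 h2].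
    split; [lia|]. intros x hx. apply In_Tlist. auto.
  - intros [h1 h2]. exists (length l). split; [apply in_seq; lia|]. apply In_allL. split; auto.
    intros x hx. apply In_Tlist. auto.
Qed.

Lemma NoDup_ALL n t K : NoDup (ALL n t K).
Proof.
  unfold ALL. apply NoDup_flat_map.
  - apply seq_NoDup.
  - intros k. apply NoDup_allL. unfold Tlist. apply NoDup_filter, seq_NoDup.
  - intros k1 k2 z h1 h2. apply In_allL in h1, h2. lia.
Qed.

Lemma K_exists n D wm : 0 < wm -> exists K, (n < K)%nat /\ D < wm * INR K.
Proof.
  intros hw. destruct (archimed (D / wm)) as [h1 _].
  exists (S n + Z.to_nat (up (D / wm)))%nat. split; [lia|].
  assert (IZR (up (D / wm)) <= INR (Z.to_nat (up (D / wm)))).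
  { destruct (Z_lt_le_dec (up (D/wm)) 0) as [l|l].
    - pose proof (pos_INR (Z.to_nat (up (D / wm)))). apply IZR_lt in l. lra.
    - rewrite INR_IZR_INZ, Z2Nat.id; auto; lra. }
  rewrite plus_INR. pose proof (pos_INR (S n)).
  assert (D / wm < INR (S n) + INR (Z.to_nat (up (D / wm)))) by lra.
  apply (Rmult_lt_compat_l wm) in H1; auto. replace (wm * (D / wm)) with D in H1 by (field; lra). lra.
Qed.

Definition mkW (s t : nat) (l : list nat) := s :: l ++ [t].
Definition gP (s t : nat) (pp : list nat * list nat) := s :: fst pp ++ snd pp ++ [t].

Definition C1f n P w s t K D :=
  lsum (fun l => if Req_EM_T (cost w (mkW s t l)) D then pathprod P (mkW s t l) else 0) (ALL n t K).
Definition C2f n P w s t K D m :=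
  lsum (fun pp => if Req_EM_T (cost w (gP s t pp)) D then kdelta (last (s :: fst pp) s) m * pathprod P (gP s t pp) else 0)
    (list_prodR (ALL n t K) (ALL n t K)).

Lemma walk_ge n P w s t p0 W :
  (forall i j, (i < n)%nat -> (j < n)%nat -> edge P i j -> 0 < w i j) ->
  shortest_path n P w s t p0 -> is_walk n P s t W -> cost w p0 <= cost w W.
Proof.
  intros Hw [_ Hm] HW. destruct (loop_removal n P w s t Hw W HW) as [q [hq [hc _]]].
  pose proof (Hm q hq). lra.
Qed.

Lemma mkW_walk n P s t K l :
  (s < n)%nat -> (t < n)%nat ->
  (forall i j, (i < n)%nat -> (j < n)%nat -> 0 <= P i j) ->
  In l (ALL n t K) -> pathprod P (mkW s t l) <> 0 -> is_walk n P s t (mkW s t l).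
Proof.
  intros hs ht HP hl hpr. apply In_ALL in hl. destruct hl as [_ hl].
  assert (HF : Forall (fun v => (v < n)%nat) (mkW s t l)).
  { apply Forall_forall. unfold mkW. intros x [<-|hx]; auto. apply in_app_iff in hx.
    destruct hx as [hx|[<-|[]]]; auto. apply hl; auto. }
  split; [|split; [|split]]; auto.
  - unfold mkW. eauto.
  - unfold mkW. change (last (s :: l ++ [t]) s) with (last ((s :: l) ++ [t]) s). apply last_snoc.
  - eapply pr_chain; eauto.
Qed.

Lemma gP_walk n P s t K pp :
  (s < n)%nat -> (t < n)%nat ->
  (forall i j, (i < n)%nat -> (j < n)%nat -> 0 <= P i j) ->
  In pp (list_prodR (ALL n t K) (ALL n t K)) -> pathprod P (gP s t pp) <> 0 -> is_walk n P s t (gP s t pp).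
Proof.
  intros hs ht HP hpp hpr. destruct pp as [l1 l2]. apply In_prodR in hpp. destruct hpp as [h1 h2].
  apply In_ALL in h1, h2. destruct h1 as [_ h1]. destruct h2 as [_ h2].
  assert (HF : Forall (fun v => (v < n)%nat) (gP s t (l1, l2))).
  { apply Forall_forall. unfold gP. simpl. intros x [<-|hx]; auto. apply in_app_iff in hx.
    destruct hx as [hx|hx]; [apply h1; auto|]. apply in_app_iff in hx.
    destruct hx as [hx|[<-|[]]]; auto. apply h2; auto. }
  split; [|split; [|split]]; auto.
  - unfold gP. eauto.
  - unfold gP. cbn [fst snd]. rewrite app_assoc. exact (last_snoc (s :: l1 ++ l2) t s).
  - eapply pr_chain; eauto.
Qed.

Lemma fsum_iter_ALL n t P w a K h x :
  fsum K (fun k => iter n t P w a k h x) =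
  lsum (fun l => pathprod (Palpha P w a) (x :: l) * h (last (x :: l) x)) (ALL n t K).
Proof.
  rewrite fsum_lsum. unfold ALL. rewrite lsum_flat_map. apply lsum_ext. intros k _. apply iter_walk.
Qed.

Lemma rpow_pow a wmin K : 0 < a -> Rpower a wmin ^ K = Rpower a (wmin * INR K).
Proof. intros ha. rewrite <- Rpower_pow by apply Rpower_pos. apply Rpower_mult. Qed.

Lemma rem_lim (f : R -> R) M wmin K D d0 :
  0 < d0 -> D < wmin * INR K ->
  (forall a, 0 < a < 1 -> a < d0 -> 0 <= f a <= M * Rpower a wmin ^ K) ->
  limit1_in (fun a => f a / Rpower a D) D01 0 0.
Proof.
  intros hd hK H. apply (lim_bound _ d0 M (wmin * INR K - D)); auto; [lra|].
  intros a ha hda. specialize (H a ha hda). rewrite rpow_pow in H by lra.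
  replace (wmin * INR K) with ((wmin * INR K - D) + D) in H by ring. rewrite Rpower_plus in H.
  pose proof (Rpower_pos a D).
  rewrite Rabs_pos_eq by (apply Rmult_le_pos; [lra| left; apply Rinv_0_lt_compat; auto]).
  apply (Rmult_le_reg_r (Rpower a D)); auto. unfold Rdiv. rewrite Rmult_assoc, Rinv_l by lra. lra.
Qed.

Lemma ANA n P w s t F Q p0 wmin K m :
  (s < n)%nat -> (t < n)%nat -> s <> t ->
  (forall i j, (i < n)%nat -> (j < n)%nat -> 0 <= P i j) ->
  (forall i, (i < n)%nat -> fsum n (P i) = 1) ->
  (forall i j, (i < n)%nat -> (j < n)%nat -> edge P i j -> 0 < w i j) ->
  is_fundamental n t P w F -> is_absorb_t n t P w Q ->
  shortest_path n P w s t p0 ->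
  0 < wmin -> (forall i j, (i < n)%nat -> (j < n)%nat -> edge P i j -> wmin <= w i j) ->
  cost w p0 < wmin * INR K ->
  (m < n)%nat -> m <> t ->
  C1f n P w s t K (cost w p0) <> 0 ->
  limit1_in (Favoid F Q s m) D01 (C2f n P w s t K (cost w p0) m / C1f n P w s t K (cost w p0)) 0.
Proof.
  intros hs ht hst HP Hs Hw HF HQ Hp0 hwm Hwm HK hm hmt HC1.
  set (D := cost w p0) in *.
  set (d0 := Rpower (1/2) (/ wmin)).
  assert (hd0 : 0 < d0) by apply Rpower_pos.
  assert (Hr : forall a, 0 < a < 1 -> a < d0 -> Rpower a wmin <= 1/2).
  { intros a ha hda. left. replace (1/2) with (Rpower d0 wmin).
    - apply Rpower_base_lt; lra.
    - unfold d0. rewrite Rpower_mult, Rinv_l by lra. apply Rpower_1; lra. }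
  set (b := fun a y => Palpha P w a y t).
  assert (Hb : forall a, 0 < a < 1 -> forall x, (x < n)%nat -> x <> t -> 0 <= b a x <= 1).
  { intros a ha x hx hxt. unfold b, Palpha. pose proof (HP x t hx ht).
    assert (P x t <= 1) by (rewrite <- (Hs x hx); apply (fsum_term n (P x) t); auto).
    pose proof (Rpower_pos a (w x t)).
    destruct (Req_dec (P x t) 0) as [e|e]; [rewrite e; lra|].
    assert (Rpower a (w x t) <= 1).
    { rewrite <- (Rpower_0_any a). apply Rpower_anti; auto. left; apply Hw; auto. unfold edge; lra. }
    split; [apply Rmult_le_pos; lra|]. nra. }
  assert (HQe : forall a, 0 < a < 1 -> forall x, (x < n)%nat -> x <> t -> Q a x = b a x + Aop n t P w a (Q a) x).
  { intros a ha x hx hxt. rewrite (HQ a ha x hx hxt). unfold b, Aop. ring. }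
  assert (HQb : forall a, 0 < a < 1 -> a < d0 -> forall x, (x < n)%nat -> x <> t -> 0 <= Q a x <= 2).
  { intros a ha hda. replace 2 with (2 * 1) by ring.
    apply (maxprin n t P w a wmin s (b a) (Q a) 1); auto; intros; try apply Hwm; auto; try apply Hr; auto. }
  set (u := fun a x => F a x m * Q a m).
  assert (HUe : forall a, 0 < a < 1 -> forall x, (x < n)%nat -> x <> t ->
            u a x = (fun y => Q a m * kdelta y m) x + Aop n t P w a (u a) x).
  { intros a ha x hx hxt. destruct (HF a ha x m hx hm hxt hmt) as [E _].
    rewrite (sumT_ext n t _ (fun k => kdelta x k * F a k m + (-1) * (Palpha P w a x k * F a k m))) in E by (intros; ring).
    rewrite sumT_plus, sumT_scal, sumT_kdelta in E by auto.
    unfold u, Aop. rewrite (sumT_ext n t _ (fun y => Q a m * (Palpha P w a x y * F a y m))) by (intros; ring).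
    rewrite sumT_scal. cbv beta. rewrite Rmult_comm. rewrite <- Rmult_plus_distr_l. f_equal. lra. }
  assert (HUb : forall a, 0 < a < 1 -> a < d0 -> forall x, (x < n)%nat -> x <> t -> 0 <= u a x <= 4).
  { intros a ha hda. replace 4 with (2 * 2) by ring.
    apply (maxprin n t P w a wmin s (fun y => Q a m * kdelta y m) (u a) 2); auto; intros; try apply Hwm; auto; try apply Hr; auto.
    pose proof (HQb a ha hda m hm hmt). unfold kdelta. destruct (x =? m)%nat; lra. }
  set (PL := list_prodR (ALL n t K) (ALL n t K)).
  set (Sw := fun a => lsum (fun l => pathprod P (mkW s t l) * Rpower a (cost w (mkW s t l))) (ALL n t K)).
  set (Sp := fun a => lsum (fun pp => (kdelta (last (s :: fst pp) s) m * pathprod P (gP s t pp)) * Rpower a (cost w (gP s t pp))) PL).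
  set (Ym := fun a => lsum (fun l => pathprod (Palpha P w a) (m :: l ++ [t])) (ALL n t K)).
  set (X := fun a => fsum K (fun k => iter n t P w a k (fun y => kdelta y m) s)).
  set (R1 := fun a => iter n t P w a K (Q a) s).
  set (R1m := fun a => iter n t P w a K (Q a) m).
  set (R2 := fun a => iter n t P w a K (u a) s).
  assert (EQs : forall a, 0 < a < 1 -> Q a s = Sw a + R1 a).
  { intros a ha. rewrite (expansion n t P w a (b a) (Q a) (HQe a ha) K s hs hst).
    unfold R1. f_equal. rewrite fsum_iter_ALL. unfold Sw. apply lsum_ext. intros l _.
    unfold b, mkW. rewrite <- pp_snoc, wt_eq by lra. reflexivity. }
  assert (EQm : forall a, 0 < a < 1 -> Q a m = Ym a + R1m a).
  { intros a ha. rewrite (expansion n t P w a (b a) (Q a) (HQe a ha) K m hm hmt).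
    unfold R1m. f_equal. rewrite fsum_iter_ALL. unfold Ym. apply lsum_ext. intros l _.
    unfold b. rewrite <- pp_snoc. reflexivity. }
  assert (EXY : forall a, 0 < a < 1 -> X a * Ym a = Sp a).
  { intros a ha. unfold X, Ym, Sp, PL. rewrite fsum_iter_ALL, lsum_prod. apply lsum_ext.
    intros [l1 l2] _. cbn [fst snd]. unfold kdelta, gP. cbn [fst snd].
    destruct (Nat.eqb_spec (last (s :: l1) s) m) as [e|e]; [|ring].
    rewrite Rmult_1_l, <- wt_eq by lra. rewrite (pp_join (Palpha P w a) s l1 (l2 ++ [t])), e. ring. }
  assert (EUs : forall a, 0 < a < 1 -> u a s = Sp a + X a * R1m a + R2 a).
  { intros a ha. rewrite (expansion n t P w a _ (u a) (HUe a ha) K s hs hst).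
    unfold R2. f_equal. rewrite <- EXY by auto.
    rewrite (fsum_iter_ALL n t P w a K (fun y => Q a m * kdelta y m)).
    unfold X. rewrite fsum_iter_ALL. rewrite <- Rmult_plus_distr_l, <- EQm by auto.
    rewrite Rmult_comm, <- lsum_scal. apply lsum_ext. intros l _. ring. }
  assert (Lw : limit1_in (fun a => Sw a / Rpower a D) D01 (C1f n P w s t K D) 0).
  { apply list_lim. intros l hl hne. apply (walk_ge n P w s t p0); auto.
    apply (mkW_walk n P s t K); auto. }
  assert (Lp : limit1_in (fun a => Sp a / Rpower a D) D01 (C2f n P w s t K D m) 0).
  { apply list_lim. intros pp hpp hne. apply (walk_ge n P w s t p0); auto.
    apply (gP_walk n P s t K); auto. intro h; apply hne; rewrite h; ring. }
  assert (L1 : limit1_in (fun a => R1 a / Rpower a D) D01 0 0).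
  { apply (rem_lim _ 2 wmin K D d0); auto. intros a ha hda. unfold R1.
    pose proof (iter_bound n t P w a wmin (Q a) 2 ha HP Hs Hwm (HQb a ha hda) K s hs hst). lra. }
  assert (L1m : limit1_in (fun a => X a * R1m a / Rpower a D) D01 0 0).
  { apply (rem_lim _ (INR K * 2) wmin K D d0); auto. intros a ha hda. unfold R1m, X.
    pose proof (iter_bound n t P w a wmin (Q a) 2 ha HP Hs Hwm (HQb a ha hda) K m hm hmt).
    assert (0 <= fsum K (fun k => iter n t P w a k (fun y => kdelta y m) s) <= INR K).
    { apply fsum_le_INR. intros k hk.
      assert (He : forall y, (y < n)%nat -> y <> t -> 0 <= kdelta y m <= 1) by (intros; unfold kdelta; destruct (y =? m)%nat; lra).
      pose proof (iter_bound n t P w a wmin _ 1 ha HP Hs Hwm He k s hs hst).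
      assert (Rpower a wmin ^ k <= 1) by (rewrite <- (pow1 k); apply pow_incr; split; [left; apply Rpower_pos| pose proof (Hr a ha hda); lra]).
      assert (0 <= Rpower a wmin ^ k) by (apply pow_le; left; apply Rpower_pos). nra. }
    assert (0 <= Rpower a wmin ^ K) by (apply pow_le; left; apply Rpower_pos).
    split; [apply Rmult_le_pos; lra|]. nra. }
  assert (L2 : limit1_in (fun a => R2 a / Rpower a D) D01 0 0).
  { apply (rem_lim _ 4 wmin K D d0); auto. intros a ha hda. unfold R2.
    pose proof (iter_bound n t P w a wmin (u a) 4 ha HP Hs Hwm (HUb a ha hda) K s hs hst). lra. }
  assert (LQ : limit1_in (fun a => Q a s / Rpower a D) D01 (C1f n P w s t K D) 0).
  { apply (lim_ext (fun a => Sw a / Rpower a D + R1 a / Rpower a D)).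
    - rewrite <- (Rplus_0_r (C1f n P w s t K D)). apply limit_plus; auto.
    - intros a ha. rewrite EQs by auto. unfold Rdiv. ring. }
  assert (LU : limit1_in (fun a => u a s / Rpower a D) D01 (C2f n P w s t K D m) 0).
  { apply (lim_ext (fun a => (Sp a / Rpower a D + X a * R1m a / Rpower a D) + R2 a / Rpower a D)).
    - rewrite <- (Rplus_0_r (C2f n P w s t K D m)). apply limit_plus; auto.
      rewrite <- (Rplus_0_r (C2f n P w s t K D m)). apply limit_plus; auto.
    - intros a ha. rewrite EUs by auto. unfold Rdiv. ring. }
  pose proof (limit_mul _ _ D01 _ _ 0 LU (limit_inv _ D01 _ 0 LQ HC1)) as LF.
  apply (lim_ext _ _ _ LF). intros a ha. unfold Favoid. fold (u a s).
  pose proof (Rpower_pos a D). unfold Rdiv. rewrite Rinv_mult, Rinv_inv.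
  transitivity (u a s * / Q a s * (Rpower a D * / Rpower a D)); [ring|]. rewrite Rinv_r by lra. ring.
Qed.

Definition Reqb (x y : R) : bool := if Req_EM_T x y then true else false.
Definition inb (m : nat) (W : list nat) : bool := if in_dec Nat.eq_dec m W then true else false.

Lemma Reqb_true x y : Reqb x y = true <-> x = y.
Proof. unfold Reqb. destruct (Req_EM_T x y); split; intros; auto; discriminate. Qed.
Lemma inb_true m W : inb m W = true <-> In m W.
Proof. unfold inb. destruct (in_dec Nat.eq_dec m W); split; intros; auto; try discriminate; contradiction. Qed.

Lemma split_unique (m : nat) a a' b b' :
  ~ In m a -> ~ In m a' -> a ++ m :: b = a' ++ m :: b' -> a = a' /\ b = b'.
Proof.
  revert a'; induction a as [|x a IH]; intros a' h1 h2 E; destruct a' as [|x' a']; simpl in *.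
  - inversion E; auto.
  - inversion E; subst. exfalso; apply h2; auto.
  - inversion E; subst. exfalso; apply h1; auto.
  - inversion E; subst. destruct (IH a') as [-> ->]; auto.
Qed.

Lemma COMB n P w s t p0 K m :
  (s < n)%nat -> (t < n)%nat -> s <> t ->
  (forall i j, (i < n)%nat -> (j < n)%nat -> 0 <= P i j) ->
  (forall i j, (i < n)%nat -> (j < n)%nat -> edge P i j -> 0 < w i j) ->
  shortest_path n P w s t p0 -> (n < K)%nat ->
  (m < n)%nat -> m <> t ->
  exists Cout, C1f n P w s t K (cost w p0) = C2f n P w s t K (cost w p0) m + Cout /\
    0 <= C2f n P w s t K (cost w p0) m /\ 0 <= Cout /\
    (C2f n P w s t K (cost w p0) m <> 0 <-> exists p, shortest_path n P w s t p /\ In m p) /\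
    (Cout <> 0 <-> exists p, shortest_path n P w s t p /\ ~ In m p).
Proof.
  intros hs ht hst HP Hw Hp0 hK hm hmt.
  set (D := cost w p0).
  set (WL := map (mkW s t) (ALL n t K)).
  set (PL := list_prodR (ALL n t K) (ALL n t K)).
  set (cW := fun W => Reqb (cost w W) D && negb (Reqb (pathprod P W) 0)).
  set (cP := fun pp => (Reqb (cost w (gP s t pp)) D && (last (s :: fst pp) s =? m)%nat) && negb (Reqb (pathprod P (gP s t pp)) 0)).
  assert (Hsp : forall W, In W WL -> cW W = true -> shortest_path n P w s t W).
  { intros W hW hc. unfold WL in hW. apply in_map_iff in hW. destruct hW as [l [<- hl]].
    unfold cW in hc. apply andb_true_iff in hc. destruct hc as [h1 h2]. apply Reqb_true in h1.
    assert (hne : pathprod P (mkW s t l) <> 0) by (intro e; apply Reqb_true in e; rewrite e in h2; discriminate).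
    pose proof (mkW_walk n P s t K l hs ht HP hl hne) as HW.
    destruct (loop_removal n P w s t Hw _ HW) as [q [hq [hc hnd]]].
    destruct Hp0 as [_ Hm0]. pose proof (Hm0 q hq).
    assert (ND : NoDup (mkW s t l)) by (apply NNPP; intro nd; specialize (hnd nd); fold D in H; lra).
    destruct HW as [a1 [a2 [a3 a4]]]. split; [repeat split; auto|].
    intros q' hq'. rewrite h1. apply Hm0; auto. }
  assert (Hin : forall p, shortest_path n P w s t p -> In p WL /\ cW p = true).
  { intros p Sp. pose proof Sp as [[[rest Er] [Lp [NDp [Fp Cp]]]] Mp].
    assert (rest <> []) by (intro e; rewrite e in Er; rewrite Er in Lp; simpl in Lp; auto).
    destruct (exists_last H) as [l [z Ez]]. subst rest.
    assert (z = t) by (rewrite Er in Lp; change (last ((s :: l) ++ [z]) s = t) in Lp; rewrite last_snoc in Lp; auto).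
    subst z. split.
    - unfold WL. apply in_map_iff. exists l. split; [unfold mkW; auto|].
      apply In_ALL. split.
      + assert (incl p (seq 0 n)) by (intros y hy; rewrite Forall_forall in Fp; apply in_seq; specialize (Fp y hy); lia).
        pose proof (NoDup_incl_length NDp H0). rewrite length_seq, Er in H1. simpl in H1. rewrite length_app in H1. simpl in H1. lia.
      + intros x hx. rewrite Forall_forall in Fp. split; [apply Fp; rewrite Er; simpl; right; apply in_or_app; auto|].
        intro ex. subst x. rewrite Er in NDp. inversion NDp; subst. apply NoDup_remove_2 in H3. apply H3. rewrite app_nil_r. auto.
    - unfold cW. apply andb_true_iff. split.
      + apply Reqb_true. destruct Hp0 as [hp0 m0]. pose proof (Mp p0 hp0). pose proof (m0 p (proj1 Sp)). unfold D. lra.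
      + apply negb_true_iff. unfold Reqb. destruct (Req_EM_T (pathprod P p) 0) as [e|e]; auto.
        pose proof (pr_pos P p Cp). lra. }
  assert (HWn : forall W, In W WL -> 0 <= pathprod P W).
  { intros W hW. unfold WL in hW. apply in_map_iff in hW. destruct hW as [l [<- hl]].
    apply In_ALL in hl. apply (pr_nonneg n); auto. apply Forall_forall. unfold mkW. intros x [<-|hx]; auto.
    apply in_app_iff in hx. destruct hx as [hx|[<-|[]]]; auto. apply hl; auto. }
  assert (E1 : C1f n P w s t K D = lsum (pathprod P) (filter cW WL)).
  { unfold C1f. rewrite <- lsum_filter. unfold WL. rewrite lsum_map. apply lsum_ext. intros l _.
    unfold cW, Reqb. destruct (Req_EM_T (cost w (mkW s t l)) D); destruct (Req_EM_T (pathprod P (mkW s t l)) 0);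
    cbn -[pathprod cost mkW]; auto. }
  assert (E2 : C2f n P w s t K D m = lsum (pathprod P) (map (gP s t) (filter cP PL))).
  { unfold C2f. rewrite lsum_map, <- lsum_filter. fold PL. apply lsum_ext. intros pp _.
    unfold cP, Reqb, kdelta. destruct (Req_EM_T (cost w (gP s t pp)) D);
    destruct (last (s :: fst pp) s =? m)%nat; destruct (Req_EM_T (pathprod P (gP s t pp)) 0);
    cbn -[pathprod cost gP]; try rewrite e0; ring. }
  assert (NDA := NoDup_ALL n t K).
  assert (PERM : Permutation (map (gP s t) (filter cP PL)) (filter (fun W => cW W && inb m W) WL)).
  { apply NoDup_Permutation.
    - apply FinFun.Injective_map_NoDup_in; [| apply NoDup_filter, NoDup_prodR; auto].
      intros [l1 l2] [l1' l2'] h1 h2 E. apply filter_In in h1, h2. destruct h1 as [i1 c1]. destruct h2 as [i2 c2].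
      unfold cP in c1, c2. cbn [fst snd] in *.
      apply andb_true_iff in c1, c2. destruct c1 as [c1 n1]. destruct c2 as [c2 n2].
      apply andb_true_iff in c1, c2. destruct c1 as [d1 m1]. destruct c2 as [d2 m2].
      apply Nat.eqb_eq in m1, m2.
      assert (hne : pathprod P (gP s t (l1, l2)) <> 0) by (intro e; apply Reqb_true in e; rewrite e in n1; discriminate).
      pose proof (gP_walk n P s t K (l1, l2) hs ht HP i1 hne) as HW.
      destruct (loop_removal n P w s t Hw _ HW) as [q [hq [hc hnd]]].
      destruct Hp0 as [_ Hm0]. pose proof (Hm0 q hq). apply Reqb_true in d1.
      assert (ND : NoDup (gP s t (l1, l2))) by (apply NNPP; intro nd; specialize (hnd nd); fold D in H; lra).
      unfold gP in ND, E. cbn [fst snd] in ND, E. inversion E as [E'].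
      rewrite !app_assoc in E'. apply app_inv_tail in E'.
      assert (ne1 : s :: l1 <> []) by discriminate. assert (ne2 : s :: l1' <> []) by discriminate.
      destruct (exists_last ne1) as [a1 [z1 Ea1]]. destruct (exists_last ne2) as [a2 [z2 Ea2]].
      rewrite Ea1, last_snoc in m1. rewrite Ea2, last_snoc in m2. subst z1 z2.
      assert (EE : a1 ++ m :: l2 = a2 ++ m :: l2').
      { replace (a1 ++ m :: l2) with ((a1 ++ [m]) ++ l2) by (rewrite <- app_assoc; auto).
        replace (a2 ++ m :: l2') with ((a2 ++ [m]) ++ l2') by (rewrite <- app_assoc; auto).
        rewrite <- Ea1, <- Ea2. simpl. f_equal. auto. }
      assert (ND1 : NoDup (a1 ++ m :: l2)).
      { replace (a1 ++ m :: l2) with ((s :: l1) ++ l2) by (rewrite Ea1, <- app_assoc; auto).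
        simpl. rewrite app_assoc in ND. change (s :: (l1 ++ l2) ++ [t]) with ((s :: l1 ++ l2) ++ [t]) in ND.
        apply NoDup_app_remove_r in ND. auto. }
      assert (N1 : ~ In m a1) by (apply NoDup_remove_2 in ND1; intro h; apply ND1; apply in_or_app; auto).
      assert (N2 : ~ In m a2) by (rewrite EE in ND1; apply NoDup_remove_2 in ND1; intro h; apply ND1; apply in_or_app; auto).
      destruct (split_unique m a1 a2 l2 l2' N1 N2 EE) as [-> ->].
      rewrite <- Ea2 in Ea1. inversion Ea1. auto.
    - apply NoDup_filter. unfold WL. apply FinFun.Injective_map_NoDup; auto.
      intros l l' E. unfold mkW in E. inversion E. apply app_inv_tail in H0. auto.
    - intros W. rewrite in_map_iff, filter_In. split.
      + intros [[l1 l2] [<- hpp]]. apply filter_In in hpp. destruct hpp as [hpp c].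
        unfold cP in c. apply andb_true_iff in c. destruct c as [c nz]. apply andb_true_iff in c.
        destruct c as [d1 m1]. apply Nat.eqb_eq in m1. cbn [fst] in m1.
        assert (cWg : cW (gP s t (l1, l2)) = true) by (unfold cW; rewrite d1, nz; auto).
        assert (hne : pathprod P (gP s t (l1, l2)) <> 0) by (intro e; apply Reqb_true in e; rewrite e in nz; discriminate).
        pose proof (gP_walk n P s t K (l1, l2) hs ht HP hpp hne) as HW.
        destruct (loop_removal n P w s t Hw _ HW) as [q [hq [hc hnd]]].
        destruct Hp0 as [_ Hm0]. pose proof (Hm0 q hq). apply Reqb_true in d1.
        assert (ND : NoDup (gP s t (l1, l2))) by (apply NNPP; intro nd; specialize (hnd nd); fold D in H; lra).
        apply In_prodR in hpp. destruct hpp as [i1 i2]. apply In_ALL in i1, i2.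
        split; [|apply andb_true_iff; split; auto].
        * unfold WL. apply in_map_iff. exists (l1 ++ l2). split; [unfold mkW, gP; simpl; rewrite app_assoc; auto|].
          apply In_ALL. split.
          -- destruct HW as [_ [_ [Fp _]]].
             assert (incl (gP s t (l1, l2)) (seq 0 n)) by (intros y hy; rewrite Forall_forall in Fp; apply in_seq; specialize (Fp y hy); lia).
             pose proof (NoDup_incl_length ND H0). rewrite length_seq in H1. unfold gP in H1. cbn [fst snd length] in H1.
             rewrite !length_app in H1 |- *. rewrite length_app in H1. simpl in H1. lia.
          -- intros x hx. apply in_app_iff in hx. destruct hx; [apply i1| apply i2]; auto.
        * apply inb_true. rewrite <- m1. unfold gP. cbn [fst snd].
          pose proof (last_In (s :: l1) s ltac:(discriminate)). simpl in H0 |- *.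
          destruct H0 as [e|h]; [left; auto| right; apply in_or_app; auto].
      + intros [hW c]. apply andb_true_iff in c. destruct c as [cw im]. apply inb_true in im.
        pose proof hW as hW'. unfold WL in hW'. apply in_map_iff in hW'. destruct hW' as [l [<- hl]].
        pose proof hl as hl'. apply In_ALL in hl'. destruct hl' as [hlen hT].
        unfold cW in cw. apply andb_true_iff in cw. destruct cw as [d nz].
        assert (hmsl : m = s \/ In m l).
        { unfold mkW in im. destruct im as [e|im]; [auto|]. apply in_app_iff in im. destruct im as [im|[e|[]]]; auto. congruence. }
        assert (H0K : In [] (ALL n t K)) by (apply In_ALL; simpl; split; [lia| tauto]).
        destruct hmsl as [<-|hml].
        * exists ([], l). split; [unfold gP, mkW; auto|]. apply filter_In. split; [apply In_prodR; auto|].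
          unfold cP. cbn [fst snd]. unfold gP, mkW in *. cbn [fst snd app] in *. rewrite d, nz. simpl. rewrite Nat.eqb_refl. auto.
        * destruct (in_split _ _ hml) as [la [lb El]].
          exists (la ++ [m], lb). split.
          -- unfold gP, mkW. cbn [fst snd]. rewrite El, <- !app_assoc. auto.
          -- apply filter_In. split.
             ++ apply In_prodR. rewrite El in hlen, hT. rewrite length_app in hlen. simpl in hlen. split; apply In_ALL.
                ** rewrite length_app. simpl. split; [lia|]. intros x hx. apply hT. apply in_app_iff in hx. apply in_or_app. destruct hx as [hx|[<-|[]]]; simpl; auto.
                ** split; [lia|]. intros x hx. apply hT. apply in_or_app. simpl; auto.
             ++ unfold cP. cbn [fst snd].
                assert (EG : gP s t (la ++ [m], lb) = mkW s t l) by (unfold gP, mkW; cbn [fst snd]; rewrite El, <- !app_assoc; auto).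
                rewrite EG, d, nz. change (last (s :: la ++ [m]) s) with (last ((s :: la) ++ [m]) s). rewrite last_snoc, Nat.eqb_refl. auto. }
  set (Cin := lsum (pathprod P) (filter (fun W => cW W && inb m W) WL)).
  set (Cout := lsum (pathprod P) (filter (fun W => cW W && negb (inb m W)) WL)).
  assert (E3 : C2f n P w s t K D m = Cin) by (rewrite E2; apply lsum_perm; auto).
  exists Cout. fold D. rewrite E3.
  assert (NN : forall f, 0 <= lsum (pathprod P) (filter f WL)).
  { intros f. apply lsum_nonneg. intros x hx. apply filter_In in hx. apply HWn; tauto. }
  split; [rewrite E1; apply lsum_filter_split|].
  split; [apply NN|]. split; [apply NN|]. split.
  - split.
    + intros hne. destruct (lsum_pos_ex _ _ hne) as [W [hW _]]. apply filter_In in hW.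
      destruct hW as [hW c]. apply andb_true_iff in c. destruct c as [c im]. exists W. split; [apply Hsp; auto| apply inb_true; auto].
    + intros [p [Sp ip]]. destruct (Hin p Sp) as [hp cp].
      assert (In p (filter (fun W => cW W && inb m W) WL)) by (apply filter_In; split; auto; rewrite cp; apply inb_true; auto).
      pose proof (lsum_term (pathprod P) _ p (fun y hy => HWn y (proj1 (proj1 (filter_In _ _ _) hy))) H).
      destruct Sp as [[_ [_ [_ [_ Cp]]]] _]. pose proof (pr_pos P p Cp). unfold Cin. lra.
  - split.
    + intros hne. destruct (lsum_pos_ex _ _ hne) as [W [hW _]]. apply filter_In in hW.
      destruct hW as [hW c]. apply andb_true_iff in c. destruct c as [c im]. exists W. split; [apply Hsp; auto|].
      intro h. apply inb_true in h. rewrite h in im. discriminate.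
    + intros [p [Sp ip]]. destruct (Hin p Sp) as [hp cp].
      assert (In p (filter (fun W => cW W && negb (inb m W)) WL)).
      { apply filter_In; split; auto; rewrite cp. unfold inb. destruct (in_dec Nat.eq_dec m p); [contradiction| auto]. }
      pose proof (lsum_term (pathprod P) _ p (fun y hy => HWn y (proj1 (proj1 (filter_In _ _ _) hy))) H).
      destruct Sp as [[_ [_ [_ [_ Cp]]]] _]. pose proof (pr_pos P p Cp). unfold Cout. lra.
Qed.

Theorem mainTheorem4 :
  forall (n : nat) (P w : nat -> nat -> R) (s t : nat)
         (F : R -> nat -> nat -> R) (Q : R -> nat -> R),
    (s < n)%nat -> (t < n)%nat -> s <> t ->
    (forall i j, (i < n)%nat -> (j < n)%nat -> 0 <= P i j) ->
    (forall i, (i < n)%nat -> fsum n (P i) = 1) ->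
    (forall i j, (i < n)%nat -> (j < n)%nat -> edge P i j -> 0 < w i j) ->
    (exists p, is_path n P s t p) ->
    is_fundamental n t P w F ->
    is_absorb_t n t P w Q ->
    (* (a) *)
    (forall m L, (m < n)%nat -> m <> t -> lim0plus (Favoid F Q s m) L -> L = 0 ->
       forall p, shortest_path n P w s t p -> ~ In m p) /\
    (* (b) *)
    (forall m L, (m < n)%nat -> m <> t -> lim0plus (Favoid F Q s m) L -> L = 1 ->
       forall p, shortest_path n P w s t p -> In m p) /\
    (* (c) *)
    (forall m L, (m < n)%nat -> m <> t -> lim0plus (Favoid F Q s m) L -> 0 < L < 1 ->
       (exists p, shortest_path n P w s t p /\ In m p) /\
       (exists p, shortest_path n P w s t p /\ ~ In m p)) /\
    (* (d) *)
    ((exists p1 p2, shortest_path n P w s t p1 /\ shortest_path n P w s t p2 /\ p1 <> p2) <->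
     (exists m L, (m < n)%nat /\ m <> t /\ lim0plus (Favoid F Q s m) L /\ 0 < L < 1)).
Proof.
  intros n P w s t F Q hs ht hst HP Hs Hw Hpath HF HQ.
  destruct (shortest_exists n P w s t Hpath) as [p0 Hp0].
  destruct (pos_min_exists (list_prodR (seq 0 n) (seq 0 n)) (fun pr => w (fst pr) (snd pr))) as [wmin [hwm Hmin]].
  assert (Hwm : forall i j, (i < n)%nat -> (j < n)%nat -> edge P i j -> wmin <= w i j).
  { intros i j hi hj e. apply (Hmin (i, j)); [apply In_prodR; split; apply in_seq; lia| apply Hw; auto]. }
  destruct (K_exists n (cost w p0) wmin hwm) as [K [hK hDK]].
  assert (Lm : forall m, (m < n)%nat -> m <> t -> exists C1 C2 Cout,
     C1 = C2 + Cout /\ 0 <= C2 /\ 0 <= Cout /\ 0 < C1 /\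
     (C2 <> 0 <-> exists p, shortest_path n P w s t p /\ In m p) /\
     (Cout <> 0 <-> exists p, shortest_path n P w s t p /\ ~ In m p) /\
     lim0plus (Favoid F Q s m) (C2 / C1)).
  { intros m hm hmt.
    destruct (COMB n P w s t p0 K m hs ht hst HP Hw Hp0 hK hm hmt) as [Cout [E [h2 [h3 [i2 i3]]]]].
    assert (HC : 0 < C1f n P w s t K (cost w p0)).
    { destruct (classic (In m p0)) as [im|nim].
      - assert (C2f n P w s t K (cost w p0) m <> 0) by (apply i2; eauto). lra.
      - assert (Cout <> 0) by (apply i3; eauto). lra. }
    exists (C1f n P w s t K (cost w p0)), (C2f n P w s t K (cost w p0) m), Cout.
    repeat split; auto; try tauto.
    apply (ANA n P w s t F Q p0 wmin K m); auto. lra. }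
  assert (Uniq : forall m L L', lim0plus (Favoid F Q s m) L -> lim0plus (Favoid F Q s m) L' -> L = L').
  { intros m L L' h1 h2. apply (single_limit (Favoid F Q s m) D01 L L' 0 adh01); auto. }
  assert (Hc : forall m L, (m < n)%nat -> m <> t -> lim0plus (Favoid F Q s m) L -> 0 < L < 1 ->
       (exists p, shortest_path n P w s t p /\ In m p) /\
       (exists p, shortest_path n P w s t p /\ ~ In m p)).
  { intros m L hm hmt hL [l0 l1].
    destruct (Lm m hm hmt) as [C1 [C2 [Co [E [h2 [h3 [h1 [i2 [i3 lim]]]]]]]]].
    pose proof (Uniq _ _ _ hL lim). subst L.
    split.
    + apply i2. intro e. rewrite e in l0. unfold Rdiv in l0. lra.
    + apply i3. intro e. rewrite e, Rplus_0_r in E. rewrite E in l1. unfold Rdiv in l1. rewrite Rinv_r in l1 by lra. lra. }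
  split; [|split; [|split]].
  - intros m L hm hmt hL e p Sp ip.
    destruct (Lm m hm hmt) as [C1 [C2 [Co [E [h2 [h3 [h1 [i2 [i3 lim]]]]]]]]].
    pose proof (Uniq _ _ _ hL lim). subst L.
    assert (C2 <> 0) by (apply i2; eauto).
    assert (C2 / C1 <> 0) by (unfold Rdiv; apply Rmult_integral_contrapositive; split; auto; apply Rinv_neq_0_compat; lra).
    lra.
  - intros m L hm hmt hL e p Sp.
    destruct (Lm m hm hmt) as [C1 [C2 [Co [E [h2 [h3 [h1 [i2 [i3 lim]]]]]]]]].
    pose proof (Uniq _ _ _ hL lim). subst L.
    apply NNPP. intro nip.
    assert (Co <> 0) by (apply i3; eauto).
    assert (C2 = C1) by (apply (Rmult_eq_reg_r (/ C1)); [rewrite Rinv_r by lra; auto| apply Rinv_neq_0_compat; lra]).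
    lra.
  - exact Hc.
  - split.
    + intros [p1 [p2 [S1 [S2 ne]]]].
      assert (Hd : exists m, (In m p1 /\ ~ In m p2) \/ (In m p2 /\ ~ In m p1)).
      { apply NNPP. intro H. apply ne. apply (same_vertices_eq n P w s t); auto.
        intros m. split; intros h; apply NNPP; intro h'; apply H; exists m; auto. }
      destruct Hd as [m Hm].
      assert (Hmn : (m < n)%nat /\ m <> t).
      { destruct Hm as [[h1 h2]|[h1 h2]].
        - destruct S1 as [[_ [_ [_ [F1 _]]]] _]. rewrite Forall_forall in F1. split; auto.
          intro e. subst m. apply h2. destruct S2 as [[[r E2] [L2 _]] _]. rewrite <- L2. apply last_In. rewrite E2. discriminate.
        - destruct S2 as [[_ [_ [_ [F1 _]]]] _]. rewrite Forall_forall in F1. split; auto.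
          intro e. subst m. apply h2. destruct S1 as [[[r E2] [L2 _]] _]. rewrite <- L2. apply last_In. rewrite E2. discriminate. }
      destruct Hmn as [hm hmt].
      destruct (Lm m hm hmt) as [C1 [C2 [Co [E [h2 [h3 [h1 [i2 [i3 lim]]]]]]]]].
      assert (C2 <> 0 /\ Co <> 0) as [c2 co].
      { destruct Hm as [[a b]|[a b]]; split; [apply i2| apply i3| apply i2| apply i3]; eauto. }
      exists m, (C2 / C1). repeat split; auto.
      * apply Rdiv_lt_0_compat; lra.
      * apply (Rmult_lt_reg_r C1); auto. unfold Rdiv. rewrite Rmult_assoc, Rinv_l by lra. lra.
    + intros [m [L [hm [hmt [hL hL01]]]]].
      destruct (Hc m L hm hmt hL hL01) as [[p1 [S1 i1]] [p2 [S2 i2]]].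
      exists p1, p2. split; auto. split; auto. intro e. subst. contradiction.
Qed.
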